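(* For every $\varepsilon>0$ there is $\gamma>0$ such that for every $\eta>0$ there exists $\delta>0$ such that for all $n>1/\delta$ and all $\mu\in\mathcal P(\Omega^n)$ the following holds. If $\mu$ is $(\delta,2)$-symmetric, then every $(\gamma,2)$-state $S$ of $\mu$ with $\mu(S)\ge\eta$ satisfies $\frac1n\sum_{x\in[n]}\|\mu_{\downarrow x}[\cdot|S]-\mu_{\downarrow x}\|_{TV}<\varepsilon$.
   Context: $\Omega$ is a fixed finite nonempty set, $\mathcal P(\mathcal X)$ the set of probability measures on a finite set $\mathcal X$, $\|\cdot\|_{TV}$ total variation. For $\mu\in\mathcal P(\Omega^n)$ and $S\subset\Omega^n$ with $\mu(S)>0$, $\mu[\cdot|S]$ is the conditional measure; for $x_1,\dots,x_k\in[n]$, $\mu_{\downarrow\{x_1,\dots,x_k\}}[\cdot|S]$ denotes the joint law of $(\boldsymbol\sigma(x_1),\dots,\boldsymbol\sigma(x_k))$ for $\boldsymbol\sigma\sim\mu[\cdot|S]$, $\mu_{\downarrow x}[\cdot|S]$ the law of $\boldsymbol\sigma(x)$, and $\mu_{\downarrow x}$ the law of $\boldsymbol\sigma(x)$ under $\mu$. A set $S\subset\Omega^n$ is an $(\varepsilon,k)$-state of $\mu$ if $\mu(S)>0$ and $\frac1{n^k}\sum_{x_1,\dots,x_k\in[n]}\|\mu_{\downarrow\{x_1,\dots,x_k\}}[\cdot|S]-\mu_{\downarrow x_1}[\cdot|S]\otimes\cdots\otimes\mu_{\downarrow x_k}[\cdot|S]\|_{TV}<\varepsilon$. The measure $\mu$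 is $(\varepsilon,k)$-symmetric if $\Omega^n$ itself is an $(\varepsilon,k)$-state of $\mu$. *)

(* Defs.v *)
From HB Require Import structures.
From mathcomp Require Import all_boot all_order all_algebra.
From mathcomp Require Import reals.
Set Implicit Arguments. Unset Strict Implicit. Unset Printing Implicit Defensive.
Import Order.TTheory GRing.Theory Num.Theory.
Local Open Scope ring_scope.

Section Defs.
Variables (R : realType) (Omega : finType).

Definition config (n : nat) := {ffun 'I_n -> Omega}.

Definition is_prob (T : finType) (mu : {ffun T -> R}) : Prop :=
  (forall t, 0 <= mu t) /\ \sum_t mu t = 1.

Definition prob (T : finType) (mu : {ffun T -> R}) (A : {set T}) : R :=
  \sum_(t in A) mu t.

Definition tv (T : finType) (p q : {ffun T -> R}) : R :=
  2^-1 * \sum_t `|p t - q t|.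

Definition cmarg (n k : nat) (mu : {ffun config n -> R}) (S : {set config n})
    (xs : {ffun 'I_k -> 'I_n}) : {ffun {ffun 'I_k -> Omega} -> R} :=
  [ffun a : {ffun 'I_k -> Omega} => prob mu (S :&: [set s : config n | [forall i, s (xs i) == a i]])
             / prob mu S].

Definition cmarg1 (n : nat) (mu : {ffun config n -> R}) (S : {set config n})
    (x : 'I_n) : {ffun Omega -> R} :=
  [ffun a => prob mu (S :&: [set s : config n | s x == a]) / prob mu S].

Definition cprod (n k : nat) (mu : {ffun config n -> R}) (S : {set config n})
    (xs : {ffun 'I_k -> 'I_n}) : {ffun {ffun 'I_k -> Omega} -> R} :=
  [ffun a : {ffun 'I_k -> Omega} => \prod_(i < k) cmarg1 mu S (xs i) (a i)].

Definition is_state (n : nat) (mu : {ffun config n -> R}) (S : {set config n})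
    (eps : R) (k : nat) : Prop :=
  0 < prob mu S /\
  (n%:R ^+ k)^-1 * \sum_(xs : {ffun 'I_k -> 'I_n}) tv (cmarg mu S xs) (cprod mu S xs)
    < eps.

Definition is_symmetric (n : nat) (mu : {ffun config n -> R}) (eps : R) (k : nat)
  : Prop := is_state mu [set: config n] eps k.

End Defs.

(* Main.v *)
Require Import Defs.
From HB Require Import structures.
From mathcomp Require Import all_boot all_order all_algebra.
From mathcomp Require Import reals.
From mathcomp Require Import ring lra.
Import Order.TTheory GRing.Theory Num.Theory.
Local Open Scope ring_scope.

Section Helpers.
Variable R : realType.

Lemma cs_ineq (I : finType) (P : pred I) (w d : I -> R) :
  (forall i, P i -> 0 <= w i) -> 0 < \sum_(i | P i) w i ->
  (\sum_(i | P i) w i * d i) ^+ 2 <=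
  (\sum_(i | P i) w i) * \sum_(i | P i) w i * d i ^+ 2.
Proof.
move=> w0 W0.
set W := \sum_(i | P i) w i; set D := \sum_(i | P i) w i * d i.
set A := \sum_(i | P i) w i * d i ^+ 2.
set c := D / W.
have H : 0 <= \sum_(i | P i) w i * (d i - c) ^+ 2.
  by apply: sumr_ge0 => i Pi; rewrite mulr_ge0 ?w0 ?sqr_ge0.
have E : \sum_(i | P i) w i * (d i - c) ^+ 2 = A - (c * 2) * D + c ^+ 2 * W.
  rewrite /A /D /W !mulr_sumr -sumrB -big_split /=.
  by apply: eq_bigr => i _; ring.
have Wn0 : W != 0 by rewrite gt_eqF.
have E2 : A - (c * 2) * D + c ^+ 2 * W = A - D ^+ 2 / W by rewrite /c; field.
rewrite E E2 in H.
set u := D ^+ 2 / W in H.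
have uW : u * W = D ^+ 2 by rewrite /u; field.
rewrite -uW mulrC -subr_ge0 -mulrBr; apply: mulr_ge0 => //; exact: ltW.
Qed.


Variable Omega : finType.

Lemma fiber1 n (mu : {ffun config Omega n -> R}) (S : {set config Omega n})
  (x : 'I_n) (F : Omega -> R) :
  \sum_w cmarg1 mu S x w * F w = (\sum_(s in S) mu s * F (s x)) / prob mu S.
Proof.
rewrite (partition_big (fun s : config Omega n => s x) xpredT) //= mulr_suml.
apply: eq_bigr => w _; rewrite ffunE /prob mulrAC mulr_suml; congr (_ * _).
apply: eq_big => t; first by rewrite !inE.
by rewrite !inE => /andP[_ /eqP ->].
Qed.

Lemma fiberk n k (mu : {ffun config Omega n -> R}) (S : {set config Omega n})
  (xs : {ffun 'I_k -> 'I_n}) (F : {ffun 'I_k -> Omega} -> R) :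
  \sum_a cmarg mu S xs a * F a =
  (\sum_(s in S) mu s * F [ffun i => s (xs i)]) / prob mu S.
Proof.
rewrite (partition_big (fun s : config Omega n => [ffun i => s (xs i)]) xpredT) //= mulr_suml.
apply: eq_bigr => a _; rewrite ffunE /prob mulrAC mulr_suml; congr (_ * _).
have E : forall s : config Omega n,
    [forall i, s (xs i) == a i] = ([ffun i => s (xs i)] == a).
  move=> s; apply/forallP/eqP => [H|<- i]; last by rewrite ffunE.
  by apply/ffunP => i; rewrite ffunE; apply/eqP.
apply: eq_big => t; first by rewrite !inE E.
by rewrite !inE E => /andP[_ /eqP ->].
Qed.

End Helpers.

Theorem corollary2p4 (R : realType) (Omega : finType) (HOmega : (0 < #|Omega|)%N) :
  forall eps : R, 0 < eps ->
  exists gamma : R, 0 < gamma /\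
  forall eta : R, 0 < eta ->
  exists delta : R, 0 < delta /\
  forall (n : nat), delta^-1 < n%:R ->
  forall mu : {ffun config Omega n -> R}, is_prob mu ->
  is_symmetric mu delta 2 ->
  forall S : {set config Omega n}, is_state mu S gamma 2 -> eta <= prob mu S ->
  (n%:R)^-1 * \sum_(x < n) tv (cmarg1 mu S x) (cmarg1 mu [set: config Omega n] x)
    < eps.
Proof.
move=> eps eps0; exists 1; split => // eta eta0.
exists (eta * eps ^+ 2); split; first by rewrite mulr_gt0 // exprn_gt0.
move=> n Hn mu [mu0 mu1] [_ Hsym] S [pS _] etaS.
have N0 : 0 < n%:R :> R.
  apply: lt_trans Hn; by rewrite invr_gt0 mulr_gt0 // exprn_gt0.
set T := [set: config Omega n].
set p := prob mu S.
have pT : prob mu T = 1.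
  by rewrite /prob -mu1; apply: eq_bigl => t; rewrite inE.
have sumT : forall F : config Omega n -> R, \sum_(s in T) F s = \sum_s F s.
  by move=> F; apply: eq_bigl => t; rewrite inE.
set g := fun (x : 'I_n) (w : Omega) => Num.sg (cmarg1 mu S x w - cmarg1 mu T x w).
set h := fun s : config Omega n => \sum_x g x (s x).
set m := \sum_s mu s * h s.
set X := \sum_(x < n) tv (cmarg1 mu S x) (cmarg1 mu T x).
set D := \sum_(s in S) mu s * (h s - m).
set V := \sum_s mu s * (h s - m) ^+ 2.
have HX : X = 2^-1 * ((\sum_(s in S) mu s * h s) / p - m).
  rewrite /X /tv -mulr_sumr; congr (_ * _).
  have E : forall x, \sum_w `|cmarg1 mu S x w - cmarg1 mu T x w| =
      (\sum_(s in S) mu s * g x (s x)) / p - \sum_s mu s * g x (s x).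
    move=> x.
    have -> : \sum_s mu s * g x (s x) = \sum_w cmarg1 mu T x w * g x w.
      by rewrite fiber1 pT divr1 sumT.
    rewrite -(@fiber1 R Omega n mu S x (g x)) -sumrB; apply: eq_bigr => w _.
    by rewrite normrEsg /g; ring.
  under eq_bigr do rewrite E.
  rewrite sumrB -mulr_suml; congr (_ / _ - _).
    rewrite exchange_big; apply: eq_bigr => s _; by rewrite /h mulr_sumr.
  rewrite /m exchange_big; apply: eq_bigr => s _; by rewrite /h mulr_sumr.
have HD : D = (\sum_(s in S) mu s * h s) - p * m.
  by rewrite /D; under eq_bigr do rewrite mulrBr; rewrite sumrB -mulr_suml.
have HDV : D ^+ 2 <= p * V.
  have := @cs_ineq R _ (fun s => s \in S) mu (fun s => h s - m) (fun s _ => mu0 s) pS.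
  move/le_trans; apply.
  rewrite ler_wpM2l; first by [].
    exact: ltW.
  rewrite /V [X in _ <= X](bigID (fun s => s \in S)) /= lerDl.
  by apply: sumr_ge0 => s _; rewrite mulr_ge0 ?sqr_ge0.
have HV : V <= 2 * \sum_(xs : {ffun 'I_2 -> 'I_n}) tv (cmarg mu T xs) (cprod mu T xs).
  have V1 : V = \sum_s mu s * h s ^+ 2 - m ^+ 2.
    rewrite /V.
    transitivity (\sum_s (mu s * h s ^+ 2 - (m * 2) * (mu s * h s) + m ^+ 2 * mu s)).
      by apply: eq_bigr => s _; ring.
    rewrite big_split sumrB /= -!mulr_sumr mu1 -/m; ring.
  set Gf := fun (f : {ffun 'I_2 -> 'I_n}) (a : {ffun 'I_2 -> Omega}) =>
    \prod_(i < 2) g (f i) (a i).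
  have G2 : forall s, h s ^+ 2 =
      \sum_(f : {ffun 'I_2 -> 'I_n}) \prod_(i < 2) g (f i) (s (f i)).
    move=> s.
    rewrite -(bigA_distr_bigA (fun (i : 'I_2) (x : 'I_n) => g x (s x))) /=.
    by rewrite expr2 !big_ord_recl big_ord0 mulr1.
  have E1 : \sum_s mu s * h s ^+ 2 =
      \sum_(f : {ffun 'I_2 -> 'I_n}) \sum_a cmarg mu T f a * Gf f a.
    under eq_bigr do rewrite G2 mulr_sumr.
    rewrite exchange_big; apply: eq_bigr => f _.
    rewrite fiberk pT divr1 sumT; apply: eq_bigr => s _; congr (_ * _).
    by rewrite /Gf; apply: eq_bigr => i _; rewrite ffunE.
  have Mm : m = \sum_x \sum_w cmarg1 mu T x w * g x w.
    rewrite /m; under eq_bigr do rewrite /h mulr_sumr.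
    rewrite exchange_big; apply: eq_bigr => x _.
    by rewrite fiber1 pT divr1 sumT.
  have E2 : m ^+ 2 =
      \sum_(f : {ffun 'I_2 -> 'I_n}) \sum_a cprod mu T f a * Gf f a.
    have -> : m ^+ 2 = \prod_(i < 2) m by rewrite expr2 !big_ord_recl big_ord0 mulr1.
    rewrite Mm.
    rewrite (bigA_distr_bigA (fun (i : 'I_2) (x : 'I_n) =>
               \sum_w cmarg1 mu T x w * g x w)) /=.
    apply: eq_bigr => f _.
    rewrite (bigA_distr_bigA (fun (i : 'I_2) (w : Omega) =>
               cmarg1 mu T (f i) w * g (f i) w)) /=.
    apply: eq_bigr => a _; rewrite ffunE /Gf big_split.
    by [].
  rewrite V1 E1 E2 -sumrB /tv mulr_sumr; apply: ler_sum => f _.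
  rewrite mulrA divff ?mul1r ?pnatr_eq0 // -sumrB; apply: ler_sum => a _.
  rewrite -mulrBl; apply: le_trans (ler_norm _) _; rewrite normrM.
  apply: ler_piMr => //; rewrite /Gf normr_prod; apply: prodr_ile1 => i _.
  by rewrite normr_ge0 /= /g normr_sg; case: (_ != 0); rewrite ?ler01 ?lexx.
have Hs : \sum_(xs : {ffun 'I_2 -> 'I_n}) tv (cmarg mu T xs) (cprod mu T xs) < n%:R ^+ 2 * (eta * eps ^+ 2).
  by move: Hsym; rewrite mulrC ltr_pdivrMr ?exprn_gt0 // mulrC.
have X0 : 0 <= X.
  apply: sumr_ge0 => x _; rewrite /tv mulr_ge0 ?invr_ge0 ?ler0n //.
  by apply: sumr_ge0 => w _.
have p0 : 0 < p by [].
have XD : D = 2 * p * X by rewrite HD HX; field; rewrite gt_eqF.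
rewrite XD in HDV.
have H1 : 4 * p * X ^+ 2 <= V.
  have : p * (4 * p * X ^+ 2) <= p * V by apply: le_trans HDV; rewrite le_eqVlt; apply/orP; left; apply/eqP; ring.
  by rewrite ler_pM2l.
set N := n%:R : R in N0 Hs *.
have H2 : V < 2 * N ^+ 2 * (p * eps ^+ 2).
  apply: lt_le_trans (_ : 2 * (N ^+ 2 * (eta * eps ^+ 2)) <= _).
    by apply: le_lt_trans HV _; rewrite ltr_pM2l.
  rewrite mulrA ler_pM2l ?mulr_gt0 ?exprn_gt0 // ler_pM2r ?exprn_gt0 //.
have H3 : p * (2 * X ^+ 2) < p * (N ^+ 2 * eps ^+ 2).
  lra.
rewrite ltr_pM2l // in H3.
rewrite mulrC ltr_pdivrMr //.
have Ne : 0 < eps * N by rewrite mulr_gt0.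
rewrite ltNge; apply/negP => HH.
have : (eps * N) ^+ 2 <= X ^+ 2.
  by rewrite !expr2; apply: ler_pM => //; exact: (ltW Ne).
have := sqr_ge0 X; rewrite exprMn; lra.
Qed.
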